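(* Let the lattice be one of the standard lattices D2Q9, D3Q19 or D3Q27 (velocities $\boldsymbol{e}_i$, weights $w_i$, $c_s^2=c^2/3$, as described in the context), and let the symmetric subspace admit the orthogonal decomposition $\mathcal{S}=\mathcal{S}^{(0)}\oplus\mathcal{S}^{(2)}\oplus\mathcal{S}^{(G)}$, where $\mathcal{S}^{(G)}$ is spanned by the vectors $(w_i\phi^{(G)}_{i,k})_i$, $k=1,\dots,N_G$, for mutually orthogonal ghost functions $\phi^{(G)}_{\cdot,k}$ (i.e. $\sum_i w_i\phi^{(G)}_{i,k}\phi^{(G)}_{i,l}=0$ for $k\neq l$). Let $f^{\mathrm{neq}}\in\mathbb{R}^Q$ satisfy mass conservation $\sum_i f_i^{\mathrm{neq}}=0$. Then for every $i$, $$ w_i\frac{\mathcal{H}^{(2)}_{i,\alpha\beta}}{2c_s^4}\mathcal{A}^{\mathrm{neq}}_{\alpha\beta} \;=\; f_i^{\mathrm{neq},+}-(\hat P^{(G)}f^{\mathrm{neq}})_i, $$ where $\mathcal{A}^{\mathrm{neq}}_{\alpha\beta}=\sum_j \mathcal{H}^{(2)}_{j,\alpha\beta}f_j^{\mathrm{neq}}$ (summation over repeated Greek indices), $f_i^{\mathrm{neq},+}=\tfrac12(f_i^{\mathrm{neq}}+f_{\bar i}^{\mathrm{neq}})$, and $$(\hat P^{(G)}f^{\mathrm{neq}})_i=\sum_{k=1}^{N_G}\frac{w_i\,\phi^{(G)}_{i,k}}{N^{(\phi)}_{G,k}}\sum_j\phi^{(G)}_{j,k}f_j^{\mathrm{neq}},\qquad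 N^{(\phi)}_{G,k}=\sum_j w_j\big(\phi^{(G)}_{j,k}\big)^2.$$
   Context: Lattices (lattice speed $c>0$, $c_s^2=c^2/3$): D2Q9 has velocities $0$, $(\pm c,0)$, $(0,\pm c)$ with weights $4/9,1/9$ and $(\pm c,\pm c)$ with weight $1/36$; D3Q19 has the rest velocity (weight $1/3$), the 6 axial velocities $\pm c\,\boldsymbol{\hat e}_\alpha$ (weight $1/18$) and the 12 face-diagonal velocities with two components $\pm c$ and one $0$ (weight $1/36$); D3Q27 has the rest velocity (weight $8/27$), axial (weight $2/27$), face-diagonal (weight $1/54$) and the 8 body-diagonal velocities $(\pm c,\pm c,\pm c)$ (weight $1/216$). $Q$ is the number of velocities, $D$ the dimension. For each $i$, $\bar i$ denotes the index with $\boldsymbol{e}_{\bar i}=-\boldsymbol{e}_i$ (so $w_{\bar i}=w_i$). Hermite tensors: $\mathcal{H}^{(2)}_{i,\alpha\beta}=e_{i\alpha}e_{i\beta}-c_s^2\delta_{\alpha\beta}$. The space $\mathbb{R}^Q$ carries the inner product $\langle f,g\rangle=\sum_i f_ig_i/w_i$. The symmetric subspace is $\mathcal{S}=\{f: f_i=f_{\bar i}\ \forall i\}$. $\mathcal{S}^{(0)}=\mathrm{span}\{(w_i)_i\}$, $\mathcal{S}^{(2)}=\mathrm{span}\{(w_i\mathcal{H}^{(2)}_{i,\alpha\beta})_i:\alpha,\beta\}$, and $\mathcal{S}^{(G)}$ is the ''ghost'' subspace spanned by $(w_i\phi^{(G)}_{i,k})_i$ with $\phi^{(G)}_{\cdot,k}$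 even under inversion. The decomposition hypothesis means these three subspaces are mutually orthogonal for $\langle\cdot,\cdot\rangle$ and their direct sum is $\mathcal{S}$. (For D2Q9, $N_G=1$ and $\phi^{(G)}_i=(e_{ix}^2-c_s^2)(e_{iy}^2-c_s^2)$.) *)

(* Defs.v *)
From mathcomp Require Import all_boot all_order all_algebra.
Set Implicit Arguments. Unset Strict Implicit. Unset Printing Implicit Defensive.
Import Order.TTheory GRing.Theory Num.Theory.
Local Open Scope ring_scope.

Inductive lattice := D2Q9 | D3Q19 | D3Q27.

Definition dim (L : lattice) : nat := match L with D2Q9 => 2 | _ => 3 end.

Fixpoint cube (d : nat) : seq (seq int) :=
  match d with
  | 0 => [:: [::]]
  | d'.+1 => flatten [seq [seq x :: s | s <- cube d'] | x <- [:: 0%Z; 1%Z; (-1)%Z]]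
  end.

Definition nnz (v : seq int) : nat := count (fun x => x != 0) v.

(** unit velocities (to be scaled by the lattice speed c) *)
Definition vels (L : lattice) : seq (seq int) :=
  match L with
  | D2Q9 => cube 2
  | D3Q19 => [seq v <- cube 3 | (nnz v <= 2)%N]
  | D3Q27 => cube 3
  end.

Definition wt (L : lattice) (k : nat) : rat :=
  match L, k with
  | D2Q9, 0 => 4%:R / 9%:R | D2Q9, 1 => 1 / 9%:R | D2Q9, _ => 1 / 36%:R
  | D3Q19, 0 => 1 / 3%:R | D3Q19, 1 => 1 / 18%:R | D3Q19, _ => 1 / 36%:R
  | D3Q27, 0 => 8%:R / 27%:R | D3Q27, 1 => 2%:R / 27%:R
  | D3Q27, 2 => 1 / 54%:R | D3Q27, _ => 1 / 216%:R
  end.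

Definition Q (L : lattice) : nat := size (vels L).

Definition uvel (L : lattice) (i : 'I_(Q L)) : seq int := nth [::] (vels L) i.

Section Lattice.
Variable R : realFieldType.

Definition e (L : lattice) (c : R) (i : 'I_(Q L)) (a : 'I_(dim L)) : R :=
  c * ((uvel i)`_a)%:~R.

Definition w (L : lattice) (i : 'I_(Q L)) : R := ratr (wt L (nnz (uvel i))).

Definition bar (L : lattice) (i : 'I_(Q L)) : 'I_(Q L) :=
  insubd i (index [seq - x | x <- uvel i] (vels L)).

Definition cs2 (c : R) : R := c ^+ 2 / 3%:R.

Definition H2 (L : lattice) (c : R) (i : 'I_(Q L)) (a b : 'I_(dim L)) : R :=
  e c i a * e c i b - cs2 c * (a == b)%:R.

Definition ip (L : lattice) (f g : 'I_(Q L) -> R) : R :=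
  \sum_i f i * g i / w i.

Definition Ssym (L : lattice) (f : 'I_(Q L) -> R) : Prop := forall i, f i = f (bar i).

Definition S0 (L : lattice) (f : 'I_(Q L) -> R) : Prop :=
  exists a : R, forall i, f i = a * w i.

Definition S2 (L : lattice) (c : R) (f : 'I_(Q L) -> R) : Prop :=
  exists A : 'I_(dim L) -> 'I_(dim L) -> R,
    forall i, f i = \sum_a \sum_b A a b * (w i * H2 c i a b).

Definition SG (L : lattice) (NG : nat) (phi : 'I_NG -> 'I_(Q L) -> R)
    (f : 'I_(Q L) -> R) : Prop :=
  exists b : 'I_NG -> R, forall i, f i = \sum_k b k * (w i * phi k i).

Definition decomposition (L : lattice) (c : R) (NG : nat)
    (phi : 'I_NG -> 'I_(Q L) -> R) : Prop :=
  [/\ (forall f g : 'I_(Q L) -> R, S0 f -> S2 c g -> ip f g = 0),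
      (forall f g, S0 f -> SG phi g -> ip f g = 0),
      (forall f g, S2 c f -> SG phi g -> ip f g = 0),
      (forall f, S0 f \/ S2 c f \/ SG phi f -> Ssym f) &
      (forall f, Ssym f -> exists f0 f2 fG, [/\ S0 f0, S2 c f2, SG phi fG &
                                              forall i, f i = f0 i + f2 i + fG i])].

Definition Aneq (L : lattice) (c : R) (f : 'I_(Q L) -> R) (a b : 'I_(dim L)) : R :=
  \sum_j H2 c j a b * f j.

Definition NGk (L : lattice) (NG : nat) (phi : 'I_NG -> 'I_(Q L) -> R) (k : 'I_NG) : R :=
  \sum_j w j * (phi k j) ^+ 2.

Definition PG (L : lattice) (NG : nat) (phi : 'I_NG -> 'I_(Q L) -> R)
    (f : 'I_(Q L) -> R) (i : 'I_(Q L)) : R :=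
  \sum_k (w i * phi k i) / NGk phi k * \sum_j phi k j * f j.

End Lattice.
Arguments w R {L} i.

(* Main.v *)
Require Import Defs.
From mathcomp Require Import all_boot all_order all_algebra.
From mathcomp Require Import ring lra.
Import Order.TTheory GRing.Theory Num.Theory.
Local Open Scope ring_scope.

Definition wz (L : lattice) (k : nat) : int :=
  match L, k with
  | D2Q9, 0 => 16 | D2Q9, 1 => 4 | D2Q9, _ => 1
  | D3Q19, 0 => 12 | D3Q19, 1 => 2 | D3Q19, _ => 1
  | D3Q27, 0 => 64 | D3Q27, 1 => 16 | D3Q27, 2 => 4 | D3Q27, _ => 1
  end.
Definition Dn (L : lattice) : nat := match L with D3Q27 => 216 | _ => 36 end.
Definition h3 (u : seq int) (a b : nat) : int := 3 * (u`_a * u`_b) - (a == b)%:R.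
Definition momchk (L : lattice) : bool :=
  all (fun p1 => all (fun p2 => all (fun p3 => all (fun p4 =>
   foldr (fun u acc => wz L (nnz u) * h3 u p1 p2 * h3 u p3 p4 + acc) 0 (vels L)
     == (Dn L)%:R * (((p1 == p3)&&(p2 == p4))%:R + ((p1 == p4)&&(p2==p3))%:R))
   (iota 0 (Defs.dim L))) (iota 0 (Defs.dim L))) (iota 0 (Defs.dim L))) (iota 0 (Defs.dim L)).
Definition barchk (L : lattice) : bool :=
  all (fun n => let u := nth [::] (vels L) n in let m := index (map -%R u) (vels L) in
     [&& m < size (vels L), nth [::] (vels L) m == map -%R u &
         index (map -%R (nth [::] (vels L) m)) (vels L) == n]%N) (iota 0 (size (vels L))).
Definition wchk (L : lattice) : bool := foldr (fun u acc => wz L (nnz u) + acc) 0 (vels L) == (Dn L)%:R.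
Lemma allchk L : [&& momchk L, barchk L & wchk L].
Proof. case: L; vm_compute; reflexivity. Qed.
Lemma wzE L k : wt L k = (wz L k)%:~R / (Dn L)%:R.
Proof. case: L; case: k => [|[|[|k]]]; vm_compute; reflexivity. Qed.

Lemma wt_gt0 L k : 0 < wt L k.
Proof. case: L; case: k => [|[|[|k]]]; vm_compute; reflexivity. Qed.

Lemma big_foldr_seq (T : Type) (V : zmodType) (F : T -> V) (s : seq T) :
  \sum_(u <- s) F u = foldr (fun u acc => F u + acc) 0 s.
Proof. by elim: s => [|x s IH]; rewrite ?big_nil ?big_cons ?IH. Qed.

Lemma sum_ord_seq L (V : zmodType) (F : seq int -> V) :
  \sum_(i < Q L) F (uvel i) = \sum_(u <- vels L) F u.
Proof. by rewrite (big_nth [::]) big_mkord. Qed.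

Lemma map_opp_nth (u : seq int) (a : nat) : (map -%R u)`_a = - u`_a.
Proof. by elim: u a => [|x u IH] [|a] //=. Qed.

Lemma bar_props L (i : 'I_(Q L)) :
  val (bar i) = index (map -%R (uvel i)) (vels L) /\ uvel (bar i) = map -%R (uvel i)
  /\ bar (bar i) = i.
Proof.
have /and3P[_ hb _] := allchk L.
have hi : (val i \in iota 0 (size (vels L))) by rewrite mem_iota /= add0n; exact: ltn_ord.
have /and3P[h1 /eqP h2 /eqP h3] := allP hb _ hi.
have hv : val (bar i) = index (map -%R (uvel i)) (vels L) by rewrite /bar val_insubd h1.
have hu : uvel (bar i) = map -%R (uvel i) by rewrite /uvel hv h2.
split=> //; split=> //.
apply: val_inj. rewrite {1}/bar val_insubd.
have h3' : index [seq - x | x <- uvel (bar i)] (vels L) = val i.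
  by rewrite hu; rewrite h2 in h3; exact: h3.
by rewrite h3' ltn_ord.
Qed.

Section R.
Variable R : realFieldType.

Lemma intr_natR n : ((n%:R : int)%:~R : R) = n%:R.
Proof. by rewrite natz. Qed.

Lemma intr_foldr (T : Type) (F : T -> int) (s : seq T) :
  ((foldr (fun u acc => F u + acc) 0 s)%:~R : R) = \sum_(u <- s) (F u)%:~R.
Proof. by elim: s => [|x s IH]; rewrite ?big_nil ?big_cons //= intrD IH. Qed.

Lemma H2E (L : lattice) (c : R) (i : 'I_(Q L)) (a b : 'I_(Defs.dim L)) :
  H2 c i a b = c ^+ 2 / 3%:R * (h3 (uvel i) a b)%:~R.
Proof.
rewrite /H2 /e /cs2 /h3.
have -> : (a == b) = (nat_of_ord a == nat_of_ord b) by [].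
have h3 : (3%:R : R) != 0 by rewrite pnatr_eq0.
case: (nat_of_ord a == nat_of_ord b); rewrite intrB !intrM ?mulr1n ?mulr0n /=; by field.
Qed.

Lemma wE (L : lattice) (i : 'I_(Q L)) : w R i = (wz L (nnz (uvel i)))%:~R / (Dn L)%:R.
Proof. by rewrite /w wzE fmorph_div /= ratr_int rmorph_nat. Qed.

Lemma Dn_neq0 L : ((Dn L)%:R : R) != 0.
Proof. by rewrite pnatr_eq0; case: L. Qed.

Lemma H2bar (L : lattice) (c : R) (i : 'I_(Q L)) (a b : 'I_(Defs.dim L)) : H2 c (bar i) a b = H2 c i a b.
Proof.
have [_ [hu _]] := bar_props _ i.
by rewrite !H2E hu /h3 !map_opp_nth mulrNN.
Qed.

Lemma w_gt0 L (i : 'I_(Q L)) : 0 < w R i.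
Proof. by rewrite /w ltr0q wt_gt0. Qed.

Lemma sum_w (L : lattice) : \sum_(i < Q L) w R i = 1.
Proof.
have /and3P[_ _ /eqP hw] := allchk L.
rewrite (eq_bigr _ (fun i _ => wE _ i)) -mulr_suml.
rewrite (@sum_ord_seq L _ (fun u => ((wz L (nnz u))%:~R : R))) -intr_foldr hw intr_natR.
by rewrite divff // Dn_neq0.
Qed.

Lemma moment L (c : R) (a b a' b' : 'I_(Defs.dim L)) :
  \sum_j w R j * H2 c j a b * H2 c j a' b' =
  cs2 c ^+ 2 * (((a==a')&&(b==b'))%:R + ((a==b')&&(b==a'))%:R).
Proof.
have /and3P[hm _ _] := allchk L.
have mi (x : 'I_(Defs.dim L)) : (nat_of_ord x \in iota 0 (Defs.dim L)) by rewrite mem_iota /= add0n ltn_ord.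
have /eqP := allP (allP (allP (allP hm _ (mi a)) _ (mi b)) _ (mi a')) _ (mi b').
move=> /(congr1 (fun z : int => (z%:~R : R))).
rewrite intr_foldr -(@sum_ord_seq L _ (fun u => ((wz L (nnz u) * h3 u a b * h3 u a' b')%:~R : R))) => hs.
transitivity (c ^+ 4 / 9%:R / (Dn L)%:R * \sum_(j < Q L) ((wz L (nnz (uvel j)) * h3 (uvel j) a b * h3 (uvel j) a' b')%:~R : R)).
  rewrite mulr_sumr; apply: eq_bigr => j _.
  rewrite !H2E wE !intrM.
  have h3 : (3%:R : R) != 0 by rewrite pnatr_eq0.
  have -> : (9%:R : R) = 3%:R * 3%:R by rewrite -natrM.
  have := Dn_neq0 L => hD.
  by field.
rewrite hs intrM intrD !intr_natR /cs2.
have h3 : (3%:R : R) != 0 by rewrite pnatr_eq0.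
have -> : (9%:R : R) = 3%:R * 3%:R by rewrite -natrM.
have := Dn_neq0 L => hD.
have -> : ((nat_of_ord a == nat_of_ord a') && (nat_of_ord b == nat_of_ord b')) = ((a==a')&&(b==b')) by [].
have -> : ((nat_of_ord a == nat_of_ord b') && (nat_of_ord b == nat_of_ord a')) = ((a==b')&&(b==a')) by [].
by field.
Qed.
End R.

Section M.
Variable R : realFieldType.
Variable L : lattice.
Implicit Types (x h : 'I_(Q L) -> R).

Lemma bar_bar (i : 'I_(Q L)) : bar (bar i) = i.
Proof. by have [_ [_ ->]] := bar_props _ i. Qed.

Lemma sum_bar (F : 'I_(Q L) -> R) : \sum_i F (bar i) = \sum_i F i.
Proof. by rewrite [RHS](reindex_inj (can_inj bar_bar)). Qed.

Lemma ip_wr x h : ip x (fun j => w R j * h j) = \sum_j x j * h j.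
Proof.
apply: eq_bigr => j _; have := w_gt0 R _ j; rewrite lt0r => /andP[hw _].
by field.
Qed.

Lemma ip_wl x h : ip (fun j => w R j * h j) x = \sum_j h j * x j.
Proof.
apply: eq_bigr => j _; have := w_gt0 R _ j; rewrite lt0r => /andP[hw _].
by field.
Qed.

Lemma sum_delta n (F : 'I_n -> R) (k : 'I_n) : \sum_l (l == k)%:R * F l = F k.
Proof.
rewrite (bigD1 k) //= eqxx mul1r big1 ?addr0 // => l /negbTE ->; by rewrite mul0r.
Qed.

Lemma sum_even x h : (forall j, h (bar j) = h j) ->
  \sum_j h j * ((x j + x (bar j)) / 2%:R) = \sum_j h j * x j.
Proof.
move=> he.
have e1 : \sum_j h j * x (bar j) = \sum_j h j * x j.
  by rewrite -[RHS]sum_bar; apply: eq_bigr => j _; rewrite he.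
have -> : \sum_j h j * ((x j + x (bar j)) / 2%:R) =
   (\sum_j h j * x j + \sum_j h j * x (bar j)) / 2%:R.
  by rewrite -big_split /= mulr_suml; apply: eq_bigr => j _; ring.
rewrite e1. have h2 : (2%:R : R) != 0 by rewrite pnatr_eq0.
by field.
Qed.
End M.

Theorem theorem1 (R : realFieldType) (L : lattice) (c : R) (hc : 0 < c)
  (NG : nat) (phi : 'I_NG -> 'I_(Q L) -> R)
  (heven : forall k i, phi k (bar i) = phi k i)
  (horth : forall k l, k != l -> \sum_i w R i * phi k i * phi l i = 0)
  (hdec : decomposition c phi)
  (f : 'I_(Q L) -> R) (hmass : \sum_i f i = 0) :
  forall i : 'I_(Q L),
    w R i * (\sum_a \sum_b H2 c i a b * Aneq c f a b) / (2%:R * cs2 c ^+ 2)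
    = (f i + f (bar i)) / 2%:R - PG phi f i.
Proof.
move=> i0.
pose g := fun j => (f j + f (bar j)) / 2%:R.
have hsym : Ssym g.
  move=> j; rewrite /g bar_bar; by rewrite addrC.
case: hdec => o02 o0G o2G _ hS.
have [f0 [f2 [fG [[a0 h0] [A h2] [bk hG] hfg]]]] := hS g hsym.
have S0w : S0 (fun j : 'I_(Q L) => w R j * 1) by exists 1 => j; rewrite mulr1 mul1r.
have sf2 : \sum_j f2 j = 0.
  have := o02 _ _ S0w (ex_intro _ A h2); rewrite ip_wl => e; rewrite -[RHS]e.
  by apply: eq_bigr => j _; rewrite mul1r.
have sfG : \sum_j fG j = 0.
  have := o0G _ _ S0w (ex_intro _ bk hG); rewrite ip_wl => e; rewrite -[RHS]e.
  by apply: eq_bigr => j _; rewrite mul1r.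
have ha0 : a0 = 0.
  have : \sum_j g j = 0.
    have e := @sum_even R L f (fun _ => 1) (fun _ => erefl).
    rewrite /g (eq_bigr _ (fun j _ => esym (mul1r ((f j + f (bar j)) / 2%:R)))) e.
    by rewrite (eq_bigr _ (fun j _ => mul1r (f j))).
  rewrite (eq_bigr _ (fun j _ => hfg j)) !big_split /= sf2 sfG !addr0.
  rewrite (eq_bigr _ (fun j _ => h0 j)) -mulr_sumr sum_w mulr1 //.
have hf0 j : f0 j = 0 by rewrite h0 ha0 mul0r.
have hk k : \sum_j phi k j * g j = bk k * NGk phi k.
  have SGk : SG phi (fun j => w R j * phi k j).
    by exists (fun l => (l == k)%:R) => j; rewrite sum_delta.
  have e0 : \sum_j f0 j * phi k j = 0 by rewrite big1 // => j _; rewrite hf0 mul0r.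
  have e2 : \sum_j f2 j * phi k j = 0.
    by have := o2G _ _ (ex_intro _ A h2) SGk; rewrite ip_wr.
  rewrite (eq_bigr (fun j => f0 j * phi k j + f2 j * phi k j + fG j * phi k j)); last first.
    by move=> j _; rewrite hfg; ring.
  rewrite !big_split /= e0 e2 !add0r.
  rewrite (eq_bigr (fun j => \sum_l bk l * (w R j * phi l j * phi k j))); last first.
    by move=> j _; rewrite hG mulr_suml; apply: eq_bigr => l _; ring.
  rewrite exchange_big /= (bigD1 k) //= [X in _ + X]big1 ?addr0.
    by rewrite -mulr_sumr /NGk; congr (_ * _); apply: eq_bigr => j _; ring.
  move=> l hl; rewrite -mulr_sumr horth ?mulr0 //.
have hA a b : Aneq c g a b = cs2 c ^+ 2 * (A a b + A b a).
  have S2ab : S2 c (fun j => w R j * H2 c j a b).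
    exists (fun x y => (x == a)%:R * (y == b)%:R) => j.
    rewrite -(@sum_delta R _ (fun x => w R j * H2 c j x b) a); apply: eq_bigr => x _.
    rewrite -(@sum_delta R _ (fun y => (x == a)%:R * (w R j * H2 c j x y)) b).
    by apply: eq_bigr => y _; ring.
  have e0 : \sum_j f0 j * H2 c j a b = 0 by rewrite big1 // => j _; rewrite hf0 mul0r.
  have eG : \sum_j H2 c j a b * fG j = 0.
    by have := o2G _ _ S2ab (ex_intro _ bk hG); rewrite ip_wl.
  rewrite /Aneq (eq_bigr (fun j => f0 j * H2 c j a b + H2 c j a b * f2 j + H2 c j a b * fG j)); last first.
    by move=> j _; rewrite hfg; ring.
  rewrite !big_split /= e0 eG add0r addr0.
  rewrite (eq_bigr (fun j => \sum_x \sum_y A x y * (w R j * H2 c j x y * H2 c j a b))); last first.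
    move=> j _; rewrite h2 mulr_sumr; apply: eq_bigr => x _; rewrite mulr_sumr.
    by apply: eq_bigr => y _; ring.
  rewrite exchange_big /=.
  rewrite (eq_bigr (fun x => \sum_y A x y * (cs2 c ^+ 2 * (((x==a)&&(y==b))%:R + ((x==b)&&(y==a))%:R)))); last first.
    move=> x _; rewrite exchange_big /=; apply: eq_bigr => y _.
    by rewrite -mulr_sumr moment.
  rewrite (eq_bigr (fun x => cs2 c ^+ 2 * ((x == a)%:R * A x b) + cs2 c ^+ 2 * ((x == b)%:R * A x a))); last first.
    move=> x _.
    rewrite (eq_bigr (fun y => cs2 c ^+ 2 * (x == a)%:R * ((y == b)%:R * A x y) + cs2 c ^+ 2 * (x == b)%:R * ((y == a)%:R * A x y))); last first.
      by move=> y _; case: (x == a); case: (y == b); case: (x==b); case: (y==a); rewrite /=; ring.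
    by rewrite big_split /= -!mulr_sumr !sum_delta; ring.
  by rewrite big_split /= -!mulr_sumr !sum_delta; ring.
have hAf a b : Aneq c f a b = cs2 c ^+ 2 * (A a b + A b a).
  rewrite -hA; symmetry; exact: (@sum_even R L f (fun j => H2 c j a b) (fun j => H2bar R L c j a b)).
have hw0 : w R i0 != 0 by rewrite lt0r_neq0 // w_gt0.
have hPG : PG phi f i0 = fG i0.
  rewrite /PG hG; apply: eq_bigr => k _.
  have e := @sum_even R L f (phi k) (heven k).
  transitivity (w R i0 * phi k i0 / NGk phi k * (bk k * NGk phi k)).
    by congr (_ * _); rewrite -e; exact: hk k.
  have [hN|hN] := eqVneq (NGk phi k) 0.
    have hz := @psumr_eq0P R _ predT (fun j => w R j * phi k j ^+ 2) (fun j _ => mulr_ge0 (ltW (w_gt0 R L j)) (sqr_ge0 (phi k j))) hN i0 isT.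
    move/eqP: hz; rewrite mulf_eq0 (negbTE hw0) /= sqrf_eq0 => /eqP ->.
    by rewrite !(mulr0, mul0r).
  by field.
have Hs a b : H2 c i0 a b = H2 c i0 b a by rewrite /H2 mulrC eq_sym.
pose S := \sum_a \sum_b A a b * H2 c i0 a b.
have eS : \sum_a \sum_b cs2 c ^+ 2 * (A a b * H2 c i0 a b) = cs2 c ^+ 2 * S.
  by rewrite /S mulr_sumr; apply: eq_bigr => a _; rewrite mulr_sumr.
have -> : \sum_a \sum_b H2 c i0 a b * Aneq c f a b = 2%:R * cs2 c ^+ 2 * S.
  rewrite (eq_bigr (fun a => \sum_b (cs2 c ^+ 2 * (A a b * H2 c i0 a b) + cs2 c ^+ 2 * (A b a * H2 c i0 b a)))); last first.
    by move=> a _; apply: eq_bigr => b _; rewrite hAf -Hs; ring.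
  rewrite (eq_bigr (fun a => \sum_b cs2 c ^+ 2 * (A a b * H2 c i0 a b) + \sum_b cs2 c ^+ 2 * (A b a * H2 c i0 b a))); last first.
    by move=> a _; rewrite big_split.
  rewrite big_split /= [X in _ + X]exchange_big /= !eS; ring.
rewrite hPG.
have -> : (f i0 + f (bar i0)) / 2%:R = g i0 by [].
rewrite hfg hf0 h2.
have -> : \sum_a \sum_b A a b * (w R i0 * H2 c i0 a b) = w R i0 * S.
  by rewrite /S mulr_sumr; apply: eq_bigr => a _; rewrite mulr_sumr; apply: eq_bigr => b _; ring.
have hcs : cs2 c != 0 by rewrite /cs2 mulf_neq0 ?expf_neq0 ?invr_eq0 ?pnatr_eq0 ?lt0r_neq0.
have h2n : (2%:R : R) != 0 by rewrite pnatr_eq0.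
by field.
Qed.
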